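(* Let $\mathbf K$ be an M$\Delta$C generated as a thick subcategory by a single object $G$. If $A\in\mathbf K$ and $V(A)=V(\mathcal S_1)\sqcup V(\mathcal S_2)$ (disjoint union) for collections of objects $\mathcal S_1,\mathcal S_2$, then there exist objects $A_1,A_2\in\mathbf K$ with $V(\mathcal S_i)=V(A_i)$ for $i=1,2$.
   Context: M$\Delta$C: triangulated category with monoidal structure $(\otimes,\mathbf 1)$, $\otimes$ exact in each variable. Prime ideal: proper thick two-sided ideal $\mathbf P$ with $\mathbf I\otimes\mathbf J\subseteq\mathbf P\Rightarrow\mathbf I\subseteq\mathbf P$ or $\mathbf J\subseteq\mathbf P$ for thick ideals. $\operatorname{Spc}\mathbf K$: set of primes; $V(A)=\{\mathbf P:A\notin\mathbf P\}$ and $V(\mathcal S)=\bigcap_{A\in\mathcal S}V(A)$. *)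

(* Defs.v *)
Set Implicit Arguments.

Record AddCat := {
  Obj : Type;
  Hom : Obj -> Obj -> Type;
  comp : forall {X Y Z : Obj}, Hom Y Z -> Hom X Y -> Hom X Z;
  idm : forall X : Obj, Hom X X;
  comp_assoc : forall X Y Z W (f : Hom X Y) (g : Hom Y Z) (h : Hom Z W),
      comp h (comp g f) = comp (comp h g) f;
  comp_id_l : forall X Y (f : Hom X Y), comp (idm Y) f = f;
  comp_id_r : forall X Y (f : Hom X Y), comp f (idm X) = f;
  hadd : forall {X Y : Obj}, Hom X Y -> Hom X Y -> Hom X Y;
  hzero : forall X Y : Obj, Hom X Y;
  hopp : forall {X Y : Obj}, Hom X Y -> Hom X Y;
  hadd_assoc : forall X Y (f g h : Hom X Y), hadd f (hadd g h) = hadd (hadd f g) h;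
  hadd_comm : forall X Y (f g : Hom X Y), hadd f g = hadd g f;
  hadd_0 : forall X Y (f : Hom X Y), hadd f (hzero X Y) = f;
  hadd_opp : forall X Y (f : Hom X Y), hadd f (hopp f) = hzero X Y;
  comp_addl : forall X Y Z (g g' : Hom Y Z) (f : Hom X Y),
      comp (hadd g g') f = hadd (comp g f) (comp g' f);
  comp_addr : forall X Y Z (g : Hom Y Z) (f f' : Hom X Y),
      comp g (hadd f f') = hadd (comp g f) (comp g f');
  zobj : Obj;
  zobj_init : forall X (f : Hom zobj X), f = hzero zobj X;
  zobj_term : forall X (f : Hom X zobj), f = hzero X zobj;
  biprod : Obj -> Obj -> Obj;
  bi_in1 : forall X Y, Hom X (biprod X Y);
  bi_in2 : forall X Y, Hom Y (biprod X Y);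
  bi_pr1 : forall X Y, Hom (biprod X Y) X;
  bi_pr2 : forall X Y, Hom (biprod X Y) Y;
  bi_11 : forall X Y, comp (bi_pr1 X Y) (bi_in1 X Y) = idm X;
  bi_22 : forall X Y, comp (bi_pr2 X Y) (bi_in2 X Y) = idm Y;
  bi_12 : forall X Y, comp (bi_pr1 X Y) (bi_in2 X Y) = hzero Y X;
  bi_21 : forall X Y, comp (bi_pr2 X Y) (bi_in1 X Y) = hzero X Y;
  bi_sum : forall X Y, hadd (comp (bi_in1 X Y) (bi_pr1 X Y))
                            (comp (bi_in2 X Y) (bi_pr2 X Y)) = idm (biprod X Y)
}.

Arguments comp {a X Y Z} _ _.
Arguments idm {a} X.
Arguments hadd {a X Y} _ _.
Arguments hzero {a} X Y.
Arguments hopp {a X Y} _.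
Arguments zobj {a}.
Arguments biprod {a} _ _.

Definition is_iso (C : AddCat) (X Y : Obj C) (f : Hom C X Y) : Prop :=
  exists g : Hom C Y X, comp g f = idm X /\ comp f g = idm Y.
Arguments is_iso {C X Y} f.

Definition isomorphic (C : AddCat) (X Y : Obj C) : Prop :=
  exists f : Hom C X Y, is_iso f.
Arguments isomorphic {C} X Y.

Record TriCat := {
  tc_add :> AddCat;
  Sh : Obj tc_add -> Obj tc_add;
  shm : forall {X Y : Obj tc_add}, Hom tc_add X Y -> Hom tc_add (Sh X) (Sh Y);
  shm_id : forall X, shm (idm X) = idm (Sh X);
  shm_comp : forall X Y Z (g : Hom tc_add Y Z) (f : Hom tc_add X Y),
      shm (comp g f) = comp (shm g) (shm f);
  shm_add : forall X Y (f g : Hom tc_add X Y), shm (hadd f g) = hadd (shm f) (shm g);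
  shm_inj : forall X Y (f g : Hom tc_add X Y), shm f = shm g -> f = g;
  shm_surj : forall X Y (g : Hom tc_add (Sh X) (Sh Y)), exists f, shm f = g;
  Sh_esurj : forall Y, exists X, isomorphic (Sh X) Y;
  dist : forall {X Y Z : Obj tc_add},
      Hom tc_add X Y -> Hom tc_add Y Z -> Hom tc_add Z (Sh X) -> Prop;
  TR1_iso : forall X Y Z X' Y' Z'
      (f : Hom tc_add X Y) (g : Hom tc_add Y Z) (h : Hom tc_add Z (Sh X))
      (f' : Hom tc_add X' Y') (g' : Hom tc_add Y' Z') (h' : Hom tc_add Z' (Sh X'))
      (a : Hom tc_add X X') (b : Hom tc_add Y Y') (c : Hom tc_add Z Z'),
      is_iso a -> is_iso b -> is_iso c ->
      comp b f = comp f' a -> comp c g = comp g' b -> comp (shm a) h = comp h' c ->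
      dist f g h -> dist f' g' h';
  TR1_id : forall X, dist (idm X) (hzero X zobj) (hzero zobj (Sh X));
  TR1_ext : forall X Y (f : Hom tc_add X Y),
      exists Z (g : Hom tc_add Y Z) (h : Hom tc_add Z (Sh X)), dist f g h;
  TR2 : forall X Y Z (f : Hom tc_add X Y) (g : Hom tc_add Y Z) (h : Hom tc_add Z (Sh X)),
      dist f g h <-> dist g h (hopp (shm f));
  TR3 : forall X Y Z X' Y' Z'
      (f : Hom tc_add X Y) (g : Hom tc_add Y Z) (h : Hom tc_add Z (Sh X))
      (f' : Hom tc_add X' Y') (g' : Hom tc_add Y' Z') (h' : Hom tc_add Z' (Sh X'))
      (a : Hom tc_add X X') (b : Hom tc_add Y Y'),
      dist f g h -> dist f' g' h' -> comp b f = comp f' a ->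
      exists c : Hom tc_add Z Z', comp c g = comp g' b /\ comp (shm a) h = comp h' c;
  TR4 : forall X Y Z Z' X' Y'
      (f : Hom tc_add X Y) (g : Hom tc_add Y Z)
      (u1 : Hom tc_add Y Z') (d1 : Hom tc_add Z' (Sh X))
      (u2 : Hom tc_add Z X') (d2 : Hom tc_add X' (Sh Y))
      (u3 : Hom tc_add Z Y') (d3 : Hom tc_add Y' (Sh X)),
      dist f u1 d1 -> dist g u2 d2 -> dist (comp g f) u3 d3 ->
      exists (a : Hom tc_add Z' Y') (b : Hom tc_add Y' X'),
        dist a b (comp (shm u1) d2) /\
        comp a u1 = comp u3 g /\ comp d3 a = d1 /\
        comp b u3 = u2 /\ comp d2 b = comp (shm f) d3
}.

Arguments Sh {t} _.
Arguments shm {t X Y} _.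
Arguments dist {t X Y Z} _ _ _.

Record MDC := {
  m_tri :> TriCat;
  tens : Obj m_tri -> Obj m_tri -> Obj m_tri;
  tm : forall {X X' Y Y' : Obj m_tri},
      Hom m_tri X X' -> Hom m_tri Y Y' -> Hom m_tri (tens X Y) (tens X' Y');
  tm_id : forall X Y, tm (idm X) (idm Y) = idm (tens X Y);
  tm_comp : forall X X' X'' Y Y' Y''
      (f : Hom m_tri X X') (f' : Hom m_tri X' X'') (g : Hom m_tri Y Y') (g' : Hom m_tri Y' Y''),
      tm (comp f' f) (comp g' g) = comp (tm f' g') (tm f g);
  tm_addl : forall X X' Y Y' (f f' : Hom m_tri X X') (g : Hom m_tri Y Y'),
      tm (hadd f f') g = hadd (tm f g) (tm f' g);
  tm_addr : forall X X' Y Y' (f : Hom m_tri X X') (g g' : Hom m_tri Y Y'),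
      tm f (hadd g g') = hadd (tm f g) (tm f g');
  unit : Obj m_tri;
  assoc : forall X Y Z, Hom m_tri (tens (tens X Y) Z) (tens X (tens Y Z));
  assoc_iso : forall X Y Z, is_iso (assoc X Y Z);
  assoc_nat : forall X X' Y Y' Z Z'
      (f : Hom m_tri X X') (g : Hom m_tri Y Y') (h : Hom m_tri Z Z'),
      comp (tm f (tm g h)) (assoc X Y Z) = comp (assoc X' Y' Z') (tm (tm f g) h);
  lunit : forall X, Hom m_tri (tens unit X) X;
  lunit_iso : forall X, is_iso (lunit X);
  lunit_nat : forall X X' (f : Hom m_tri X X'),
      comp f (lunit X) = comp (lunit X') (tm (idm unit) f);
  runit : forall X, Hom m_tri (tens X unit) X;
  runit_iso : forall X, is_iso (runit X);
  runit_nat : forall X X' (f : Hom m_tri X X'),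
      comp f (runit X) = comp (runit X') (tm f (idm unit));
  pentagon : forall W X Y Z,
      comp (assoc W X (tens Y Z)) (assoc (tens W X) Y Z)
      = comp (tm (idm W) (assoc X Y Z))
             (comp (assoc W (tens X Y) Z) (tm (assoc W X Y) (idm Z)));
  triangle : forall X Y,
      comp (tm (idm X) (lunit Y)) (assoc X unit Y) = tm (runit X) (idm Y);
  (* exactness of ⊗ in each variable *)
  thR : forall X Y, Hom m_tri (tens X (Sh Y)) (Sh (tens X Y));
  thR_iso : forall X Y, is_iso (thR X Y);
  thR_nat : forall X X' Y Y' (f : Hom m_tri X X') (g : Hom m_tri Y Y'),
      comp (shm (tm f g)) (thR X Y) = comp (thR X' Y') (tm f (shm g));
  thR_dist : forall W X Y Z (f : Hom m_tri X Y) (g : Hom m_tri Y Z) (h : Hom m_tri Z (Sh X)),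
      dist f g h ->
      dist (tm (idm W) f) (tm (idm W) g) (comp (thR W X) (tm (idm W) h));
  thL : forall X Y, Hom m_tri (tens (Sh X) Y) (Sh (tens X Y));
  thL_iso : forall X Y, is_iso (thL X Y);
  thL_nat : forall X X' Y Y' (f : Hom m_tri X X') (g : Hom m_tri Y Y'),
      comp (shm (tm f g)) (thL X Y) = comp (thL X' Y') (tm (shm f) g);
  thL_dist : forall W X Y Z (f : Hom m_tri X Y) (g : Hom m_tri Y Z) (h : Hom m_tri Z (Sh X)),
      dist f g h ->
      dist (tm f (idm W)) (tm g (idm W)) (comp (thL X W) (tm h (idm W)))
}.

Arguments tens {m} _ _.

Section Spc.
Variable K : MDC.

(* a (full, replete) thick subcategory, given by its class of objects *)
Definition thick (P : Obj K -> Prop) : Prop :=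
  P zobj /\
  (forall X Y : Obj K, isomorphic X Y -> P X -> P Y) /\
  (forall X : Obj K, P X <-> P (Sh X)) /\
  (forall (X Y Z : Obj K) (f : Hom K X Y) (g : Hom K Y Z) (h : Hom K Z (Sh X)),
      dist f g h ->
      (P X -> P Y -> P Z) /\ (P Y -> P Z -> P X) /\ (P X -> P Z -> P Y)) /\
  (forall X Y : Obj K, P (biprod X Y) -> P X).

Definition thick_ideal (P : Obj K -> Prop) : Prop :=
  thick P /\ forall X Y : Obj K, P X -> P (tens X Y) /\ P (tens Y X).

Definition prime_ideal (P : Obj K -> Prop) : Prop :=
  thick_ideal P /\ (exists X, ~ P X) /\
  forall I J : Obj K -> Prop, thick_ideal I -> thick_ideal J ->
    (forall a b, I a -> J b -> P (tens a b)) ->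
    (forall a, I a -> P a) \/ (forall b, J b -> P b).

Definition V (A : Obj K) (P : Obj K -> Prop) : Prop := prime_ideal P /\ ~ P A.
Definition VS (S : Obj K -> Prop) (P : Obj K -> Prop) : Prop :=
  prime_ideal P /\ forall A, S A -> ~ P A.

Definition thick_generator (G : Obj K) : Prop :=
  forall P : Obj K -> Prop, thick P -> P G -> forall X, P X.

End Spc.

Arguments thick {K} P.
Arguments thick_ideal {K} P.
Arguments prime_ideal {K} P.
Arguments V {K} A P.
Arguments VS {K} S P.
Arguments thick_generator {K} G.

(* Main.v *)
Require Import Defs.
From Stdlib Require Import Setoid Classical.
From mathcomp Require all_boot boolp classical_sets.

Module ZornM.
Import all_boot boolp classical_sets.
Local Open Scope classical_set_scope.

Lemma zorn_sets (T : Type) (P : (T -> Prop) -> Prop) :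
  (forall F : (T -> Prop) -> Prop, (forall X, F X -> P X) ->
     (forall X Y, F X -> F Y -> (forall t, X t -> Y t) \/ (forall t, Y t -> X t)) ->
     P (fun t => exists X, F X /\ X t)) ->
  exists A, P A /\ forall B, (forall t, A t -> B t) -> P B -> forall t, B t -> A t.
Proof.
move=> H.
have HB : forall F, F `<=` P -> total_on F subset -> P (\bigcup_(X in F) X).
  move=> F FP Ftot.
  have -> : (\bigcup_(X in F) X) = (fun t => exists X, F X /\ X t).
    by apply/funext => t; apply/propext; split; [case=> X FX Xt; exists X|case=> X [] ? ?; exists X].
  apply: H => // X Y FX FY; exact: Ftot.
have [A [PA Amax]] := @Zorn_bigcup T P HB.
exists A; split => // B AB PB t Bt.
apply: contrapT => nAt.
apply: (Amax B) => //; split => //.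
by move=> /(_ t Bt).
Qed.

End ZornM.
Import ZornM.

Section Alg.
Set Implicit Arguments.
Unset Strict Implicit.
Variable C : AddCat.

Lemma hadd_self (X Y : Obj C) (a : Hom C X Y) : hadd a a = a -> a = hzero X Y.
Proof.
  intro H. assert (E: hadd (hadd a a) (hopp a) = hzero X Y) by (rewrite H; apply hadd_opp).
  rewrite <- hadd_assoc, hadd_opp, hadd_0 in E. exact E.
Qed.

Lemma comp_0r (X Y Z : Obj C) (f : Hom C Y Z) : comp f (hzero X Y) = hzero X Z.
Proof.
  apply hadd_self. rewrite <- comp_addr, hadd_0. reflexivity.
Qed.

Lemma comp_0l (X Y Z : Obj C) (f : Hom C X Y) : comp (hzero Y Z) f = hzero X Z.
Proof.
  apply hadd_self. rewrite <- comp_addl, hadd_0. reflexivity.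
Qed.

Lemma hadd_0l (X Y : Obj C) (f : Hom C X Y) : hadd (hzero X Y) f = f.
Proof. rewrite hadd_comm. apply hadd_0. Qed.

Lemma comp4 (X Y Z W V : Obj C) (a : Hom C W V) (b : Hom C Z W) (c : Hom C Y Z) (d : Hom C X Y) :
  comp (comp a b) (comp c d) = comp a (comp (comp b c) d).
Proof. rewrite <- comp_assoc. rewrite (comp_assoc _ _ _ _ _ d c b). reflexivity. Qed.

Lemma iso_sym (X Y : Obj C) : isomorphic X Y -> isomorphic Y X.
Proof. intros [f [g [H1 H2]]]. exists g. exists f. split; assumption. Qed.

Lemma iso_trans (X Y Z : Obj C) : isomorphic X Y -> isomorphic Y Z -> isomorphic X Z.
Proof.
  intros [f [f' [H1 H2]]] [g [g' [H3 H4]]]. exists (comp g f). exists (comp f' g'). split.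
  - rewrite comp4, H3, comp_id_l. exact H1.
  - rewrite comp4, H2, comp_id_l. exact H4.
Qed.

Lemma iso_refl (X : Obj C) : isomorphic X X.
Proof. exists (idm X), (idm X). rewrite comp_id_l. split; reflexivity. Qed.

Lemma iso_of_is_iso (X Y : Obj C) (f : Hom C X Y) : is_iso f -> isomorphic X Y.
Proof. intro H; exists f; exact H. Qed.

Lemma zero_iso (X : Obj C) : idm X = hzero X X -> isomorphic X zobj.
Proof.
  intro H. exists (hzero X zobj), (hzero zobj X). split.
  - rewrite comp_0l. symmetry; exact H.
  - rewrite (zobj_init C zobj (idm zobj)). apply zobj_init.
Qed.

Lemma biprod_iso (Z X Y : Obj C) (i1 : Hom C X Z) (i2 : Hom C Y Z) (p1 : Hom C Z X) (p2 : Hom C Z Y) :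
  comp p1 i1 = idm X -> comp p2 i2 = idm Y -> comp p1 i2 = hzero Y X -> comp p2 i1 = hzero X Y ->
  hadd (comp i1 p1) (comp i2 p2) = idm Z -> isomorphic Z (biprod X Y).
Proof.
  intros E11 E22 E12 E21 Es.
  exists (hadd (comp (bi_in1 C X Y) p1) (comp (bi_in2 C X Y) p2)).
  exists (hadd (comp i1 (bi_pr1 C X Y)) (comp i2 (bi_pr2 C X Y))).
  rewrite !comp_addl, !comp_addr, !comp4.
  rewrite bi_11, bi_22, bi_12, bi_21, E11, E22, E12, E21.
  rewrite !comp_0l, !comp_0r, !comp_id_l, hadd_0, hadd_0l, hadd_0, hadd_0l.
  split; [exact Es|apply bi_sum].
Qed.
End Alg.


Section M.
Set Implicit Arguments.
Unset Strict Implicit.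
Variable K : MDC.

Lemma tmR_0 (W X Y : Obj K) : tm K (idm W) (hzero X Y) = hzero (tens W X) (tens W Y).
Proof. apply hadd_self. rewrite <- tm_addr, hadd_0. reflexivity. Qed.
Lemma tmL_0 (W X Y : Obj K) : tm K (hzero X Y) (idm W) = hzero (tens X W) (tens Y W).
Proof. apply hadd_self. rewrite <- tm_addl, hadd_0. reflexivity. Qed.

Lemma tmR_comp (W X Y Z : Obj K) (f : Hom K X Y) (g : Hom K Y Z) :
  tm K (idm W) (comp g f) = comp (tm K (idm W) g) (tm K (idm W) f).
Proof. rewrite <- tm_comp, comp_id_l. reflexivity. Qed.
Lemma tmL_comp (W X Y Z : Obj K) (f : Hom K X Y) (g : Hom K Y Z) :
  tm K (comp g f) (idm W) = comp (tm K g (idm W)) (tm K f (idm W)).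
Proof. rewrite <- tm_comp, comp_id_l. reflexivity. Qed.

Lemma iso_tmR (W X Y : Obj K) : isomorphic X Y -> isomorphic (tens W X) (tens W Y).
Proof.
  intros [f [g [H1 H2]]]. exists (tm K (idm W) f), (tm K (idm W) g).
  rewrite <- !tmR_comp, H1, H2, !tm_id. split; reflexivity.
Qed.
Lemma iso_tmL (W X Y : Obj K) : isomorphic X Y -> isomorphic (tens X W) (tens Y W).
Proof.
  intros [f [g [H1 H2]]]. exists (tm K f (idm W)), (tm K g (idm W)).
  rewrite <- !tmL_comp, H1, H2, !tm_id. split; reflexivity.
Qed.

Lemma tens_zeroR (W : Obj K) : isomorphic (tens W zobj) zobj.
Proof.
  apply zero_iso. rewrite <- tm_id, (zobj_init _ _ (idm zobj)). apply tmR_0.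
Qed.
Lemma tens_zeroL (W : Obj K) : isomorphic (tens zobj W) zobj.
Proof.
  apply zero_iso. rewrite <- tm_id, (zobj_init _ _ (idm zobj)). apply tmL_0.
Qed.

Lemma tens_biprodR (W X Y : Obj K) :
  isomorphic (tens W (biprod X Y)) (biprod (tens W X) (tens W Y)).
Proof.
  apply (@biprod_iso _ _ _ _ (tm K (idm W) (bi_in1 K X Y)) (tm K (idm W) (bi_in2 K X Y))
                            (tm K (idm W) (bi_pr1 K X Y)) (tm K (idm W) (bi_pr2 K X Y))).
  - rewrite <- tmR_comp, bi_11, tm_id. reflexivity.
  - rewrite <- tmR_comp, bi_22, tm_id. reflexivity.
  - rewrite <- tmR_comp, bi_12, tmR_0. reflexivity.
  - rewrite <- tmR_comp, bi_21, tmR_0. reflexivity.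
  - rewrite <- !tmR_comp, <- tm_addr, bi_sum, tm_id. reflexivity.
Qed.
Lemma tens_biprodL (W X Y : Obj K) :
  isomorphic (tens (biprod X Y) W) (biprod (tens X W) (tens Y W)).
Proof.
  apply (@biprod_iso _ _ _ _ (tm K (bi_in1 K X Y) (idm W)) (tm K (bi_in2 K X Y) (idm W))
                            (tm K (bi_pr1 K X Y) (idm W)) (tm K (bi_pr2 K X Y) (idm W))).
  - rewrite <- tmL_comp, bi_11, tm_id. reflexivity.
  - rewrite <- tmL_comp, bi_22, tm_id. reflexivity.
  - rewrite <- tmL_comp, bi_12, tmL_0. reflexivity.
  - rewrite <- tmL_comp, bi_21, tmL_0. reflexivity.
  - rewrite <- !tmL_comp, <- tm_addl, bi_sum, tm_id. reflexivity.
Qed.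

Lemma thick_preR (P : Obj K -> Prop) (W : Obj K) : thick P -> thick (fun X => P (tens W X)).
Proof.
  intros (H0 & Hi & Hs & Ht & Hb). split; [|split; [|split; [|split]]].
  - apply (Hi zobj). apply iso_sym, tens_zeroR. exact H0.
  - intros X Y HXY. apply Hi, iso_tmR, HXY.
  - intros X. rewrite (Hs (tens W X)). split; apply Hi.
    + apply iso_sym, (iso_of_is_iso (thR_iso K W X)).
    + apply (iso_of_is_iso (thR_iso K W X)).
  - intros X Y Z f g h D. apply (Ht _ _ _ _ _ _ (thR_dist K W X Y Z f g h D)).
  - intros X Y HP. apply (Hb _ (tens W Y)). apply (Hi _ _ (tens_biprodR W X Y) HP).
Qed.
Lemma thick_preL (P : Obj K -> Prop) (W : Obj K) : thick P -> thick (fun X => P (tens X W)).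
Proof.
  intros (H0 & Hi & Hs & Ht & Hb). split; [|split; [|split; [|split]]].
  - apply (Hi zobj). apply iso_sym, tens_zeroL. exact H0.
  - intros X Y HXY. apply Hi, iso_tmL, HXY.
  - intros X. rewrite (Hs (tens X W)). split; apply Hi.
    + apply iso_sym, (iso_of_is_iso (thL_iso K X W)).
    + apply (iso_of_is_iso (thL_iso K X W)).
  - intros X Y Z f g h D. apply (Ht _ _ _ _ _ _ (thL_dist K W X Y Z f g h D)).
  - intros X Y HP. apply (Hb _ (tens Y W)). apply (Hi _ _ (tens_biprodL W X Y) HP).
Qed.
End M.


Section S.
Set Implicit Arguments.
Unset Strict Implicit.
Variable K : MDC.

Lemma thick_inter (I : Type) (Qi : I -> Prop) (F : I -> Obj K -> Prop) :
  (forall i, Qi i -> thick (F i)) -> thick (fun x => forall i, Qi i -> F i x).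
Proof.
  intro H. split; [|split; [|split; [|split]]].
  - intros i q. destruct (H i q) as (H0 & _). exact H0.
  - intros X Y HXY HX i q. destruct (H i q) as (_ & Hi & _). apply (Hi X); auto.
  - intros X. split; intros HX i q; destruct (H i q) as (_ & _ & Hs & _).
    + apply (proj1 (Hs X)); auto.
    + apply (proj2 (Hs X)); auto.
  - intros X Y Z f g h D. split; [|split]; intros H1 H2 i q;
      destruct (H i q) as (_ & _ & _ & Ht & _); apply (Ht _ _ _ _ _ _ D); auto.
  - intros X Y HX i q. destruct (H i q) as (_ & _ & _ & _ & Hb). apply (Hb X Y); auto.
Qed.

Lemma thick_ext (P Q : Obj K -> Prop) : thick P -> (forall x, P x <-> Q x) -> thick Q.
Proof.
  intros (H0 & Hi & Hs & Ht & Hb) E. split; [|split; [|split; [|split]]].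
  - apply E; auto.
  - intros X Y HXY HX. apply E. apply (Hi X); auto. apply E; auto.
  - intros X. rewrite <- !E. apply Hs.
  - intros X Y Z f g h D. rewrite <- !E. apply (Ht _ _ _ _ _ _ D).
  - intros X Y. rewrite <- !E. apply Hb.
Qed.

Lemma thick_ideal_ext (P Q : Obj K -> Prop) : thick_ideal P -> (forall x, P x <-> Q x) -> thick_ideal Q.
Proof.
  intros [Ht Hid] E. split. apply (thick_ext Ht); auto.
  intros X Y HX. rewrite <- !E. apply Hid. apply E; auto.
Qed.

Lemma thick_ideal_inter (I : Type) (Qi : I -> Prop) (F : I -> Obj K -> Prop) :
  (forall i, Qi i -> thick_ideal (F i)) -> thick_ideal (fun x => forall i, Qi i -> F i x).
Proof.
  intro H. split.
  - apply thick_inter. intros i q; apply (H i q).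
  - intros X Y HX. split; intros i q; destruct (H i q) as [_ Hid]; apply (Hid X Y (HX i q)).
Qed.

Lemma iso_assoc (a b c : Obj K) : isomorphic (tens (tens a b) c) (tens a (tens b c)).
Proof. exact (iso_of_is_iso (assoc_iso K a b c)). Qed.
Lemma iso_runit (a : Obj K) : isomorphic (tens a (unit K)) a.
Proof. exact (iso_of_is_iso (runit_iso K a)). Qed.

Lemma ti_iso (P : Obj K -> Prop) X Y : thick_ideal P -> isomorphic X Y -> P X -> P Y.
Proof. intros [(_ & Hi & _) _]. apply Hi. Qed.
Lemma ti_l (P : Obj K -> Prop) X Y : thick_ideal P -> P X -> P (tens X Y).
Proof. intros [_ Hid] HX. apply (Hid X Y HX). Qed.
Lemma ti_r (P : Obj K -> Prop) X Y : thick_ideal P -> P X -> P (tens Y X).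
Proof. intros [_ Hid] HX. apply (Hid X Y HX). Qed.

Definition LA (P J : Obj K -> Prop) : Obj K -> Prop :=
  fun u => forall v, J v -> forall c, P (tens (tens u c) v).

Lemma LA_ti (P J : Obj K -> Prop) : thick_ideal P -> thick_ideal (LA P J).
Proof.
  intro HP. split.
  - unfold LA.
    apply (@thick_ext (fun u => forall p : Obj K * Obj K, J (snd p) -> P (tens (tens u (fst p)) (snd p)))).
    + apply (@thick_inter _ (fun p : Obj K * Obj K => J (snd p))
               (fun p u => P (tens (tens u (fst p)) (snd p)))).
      intros [c v] _. simpl.
      apply (@thick_preL K (fun z => P (tens z v)) c). apply thick_preL. apply HP.
    + intro x. split.
      * intros H v Jv c. apply (H (c, v) Jv).
      * intros H [c v] Jv. apply (H v Jv c).
  - intros X Y HX. split; intros v Jv c.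
    + apply (@ti_iso P (tens (tens X (tens Y c)) v)); auto.
      * apply iso_tmL, iso_sym, iso_assoc.
    + apply (@ti_iso P (tens Y (tens (tens X c) v))); auto.
      * apply iso_sym. apply (@iso_trans _ _ (tens (tens Y (tens X c)) v)).
        -- apply iso_tmL, iso_assoc.
        -- apply iso_assoc.
      * apply ti_r; auto.
Qed.

Definition RA (P I : Obj K -> Prop) : Obj K -> Prop :=
  fun v => forall u, I u -> P (tens u v).

Lemma RA_ti (P I : Obj K -> Prop) : thick_ideal P -> (forall u d, I u -> I (tens u d)) ->
  thick_ideal (RA P I).
Proof.
  intros HP HI. split.
  - unfold RA. apply (@thick_inter _ I (fun u v => P (tens u v))).
    intros u _. apply thick_preR. apply HP.
  - intros X Y HX. split; intros u Iu.
    + apply (@ti_iso P (tens (tens u X) Y)); auto.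
      * apply iso_assoc.
      * apply ti_l; auto.
    + apply (@ti_iso P (tens (tens u Y) X)); auto.
      * apply iso_assoc.
Qed.

Lemma directed_union (fam : (Obj K -> Prop) -> Prop) :
  (forall T, fam T -> thick_ideal T) -> (exists T, fam T) ->
  (forall T1 T2, fam T1 -> fam T2 -> exists T3, fam T3 /\ (forall x, T1 x -> T3 x) /\ (forall x, T2 x -> T3 x)) ->
  thick_ideal (fun x => exists T, fam T /\ T x).
Proof.
  intros Hf [T0 HT0] Hd. split; [split; [|split; [|split; [|split]]]|].
  - exists T0. split; auto. destruct (Hf T0 HT0) as [(H0 & _) _]. exact H0.
  - intros X Y HXY [T [fT TX]]. exists T. split; auto.
    destruct (Hf T fT) as [(_ & Hi & _) _]. apply (Hi X); auto.
  - intros X. split; intros [T [fT TX]]; exists T; split; auto;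
      destruct (Hf T fT) as [(_ & _ & Hs & _) _]; [apply (proj1 (Hs X))|apply (proj2 (Hs X))]; auto.
  - intros X Y Z f g h D. split; [|split]; intros [T1 [f1 H1]] [T2 [f2 H2]];
      destruct (Hd T1 T2 f1 f2) as [T3 [f3 [i1 i2]]]; exists T3; split; auto;
      destruct (Hf T3 f3) as [(_ & _ & _ & Ht & _) _]; destruct (Ht _ _ _ _ _ _ D) as (a & b & c); auto.
  - intros X Y [T [fT TX]]. exists T. split; auto.
    destruct (Hf T fT) as [(_ & _ & _ & _ & Hb) _]. apply (Hb X Y); auto.
  - intros X Y [T [fT TX]]. split; exists T; split; auto; destruct (Hf T fT) as [_ Hid];
      apply (Hid X Y TX).
Qed.
End S.


Unset Implicit Arguments.
Set Strict Implicit.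
Section D.
Variable K : MDC.
Variable G : Obj K.
Hypothesis hgen : thick_generator G.

Lemma prime_notG (P : Obj K -> Prop) : prime_ideal P -> ~ P G.
Proof.
  intros [[Ht _] [[x nx] _]] PG. apply nx. apply (hgen P Ht PG).
Qed.

Lemma L1 (P : Obj K -> Prop) x y : prime_ideal P -> P (tens (tens x G) y) -> P x \/ P y.
Proof.
  intros HPr HP. pose proof HPr as [HPi [_ Hpr]].
  set (I1 := LA P (fun v => v = y)).
  assert (HI1 : thick_ideal I1) by (apply LA_ti; exact HPi).
  set (J1 := RA P I1).
  assert (HJ1 : thick_ideal J1).
  { apply RA_ti; auto. intros u d Iu. apply ti_l; auto. }
  assert (xI : I1 x).
  { intros v Hv c. subst v.
    assert (Ht : thick (fun c => P (tens (tens x c) y))).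
    { apply (@thick_preR K (fun z => P (tens z y)) x). apply thick_preL. apply HPi. }
    apply (hgen _ Ht HP). }
  assert (yJ : J1 y).
  { intros u Iu. apply (@ti_iso _ P (tens (tens u (unit K)) y)); [exact HPi| |apply (Iu y eq_refl)].
    apply iso_tmL, iso_runit. }
  destruct (Hpr I1 J1 HI1 HJ1) as [H|H].
  - intros a b Ia Jb. apply Jb, Ia.
  - left. apply H, xI.
  - right. apply H, yJ.
Qed.

Lemma Vmul (P : Obj K -> Prop) x y : V (tens (tens x G) y) P <-> V x P /\ V y P.
Proof.
  split.
  - intros [HPr nP]. pose proof HPr as [HPi _]. split; split; auto; intro H; apply nP.
    + apply ti_l; auto. apply ti_l; auto.
    + apply ti_r; auto.
  - intros [[HPr nx] [_ ny]]. split; auto. intro H. destruct (L1 _ _ _ HPr H); auto.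
Qed.
End D.


Section E.
Variable K : MDC.
Variable G : Obj K.
Hypothesis hgen : thick_generator G.
Variables (A : Obj K) (S1 S2 : Obj K -> Prop).
Hypothesis hV : forall P, V A P <-> (VS S1 P \/ VS S2 P).
Hypothesis hdisj : forall P, ~ (VS S1 P /\ VS S2 P).

Definition Qm (m : Obj K) : Prop := exists a1 a2,
  (forall P, V m P <-> V a1 P /\ V a2 P) /\ (forall P, VS S1 P -> V a1 P) /\ (forall P, VS S2 P -> V a2 P).

Lemma VG P : prime_ideal P -> V G P.
Proof. intro H. split; auto. apply (prime_notG _ _ hgen _ H). Qed.

Lemma Q_G : Qm G.
Proof.
  exists G, G. split; [|split].
  - intro P. tauto.
  - intros P [HP _]. apply VG, HP.
  - intros P [HP _]. apply VG, HP.
Qed.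

Lemma Q_S1 s : S1 s -> Qm s.
Proof.
  intro Hs. exists s, G. split; [|split].
  - intro P. split; [intro H; split; auto; apply VG, H|tauto].
  - intros P [HP HS]. split; auto.
  - intros P [HP _]. apply VG, HP.
Qed.

Lemma Q_S2 s : S2 s -> Qm s.
Proof.
  intro Hs. exists G, s. split; [|split].
  - intro P. split; [intro H; split; auto; apply VG, H|tauto].
  - intros P [HP _]. apply VG, HP.
  - intros P [HP HS]. split; auto.
Qed.

Lemma Q_mul m m' : Qm m -> Qm m' -> Qm (tens (tens m G) m').
Proof.
  intros [a1 [a2 [E [H1 H2]]]] [b1 [b2 [E' [H1' H2']]]].
  exists (tens (tens a1 G) b1), (tens (tens a2 G) b2). split; [|split].
  - intro P. rewrite !(Vmul _ _ hgen), E, E'. tauto.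
  - intros P HP. rewrite (Vmul _ _ hgen). auto.
  - intros P HP. rewrite (Vmul _ _ hgen). auto.
Qed.

Definition gen (X : Obj K -> Prop) : Obj K -> Prop :=
  fun x => forall T, (thick_ideal T /\ forall y, X y -> T y) -> T x.

Lemma gen_ti X : thick_ideal (gen X).
Proof. apply (@thick_ideal_inter K _ (fun T => thick_ideal T /\ forall y, X y -> T y) (fun T => T)).
  intros T [H _]; exact H. Qed.

Lemma key : exists m, Qm m /\ forall P, prime_ideal P -> P m.
Proof.
  apply NNPP; intro Hn.
  assert (Hav : forall m, Qm m -> exists P, prime_ideal P /\ ~ P m).
  { intros m Qm0. apply NNPP; intro H'. apply Hn. exists m. split; auto.
    intros P HP. apply NNPP; intro H2. apply H'. exists P; auto. }
  set (N := fun x : Obj K => forall T, thick_ideal T -> T x).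
  assert (HN : thick_ideal N).
  { apply (@thick_ideal_inter K _ (fun T : Obj K -> Prop => thick_ideal T) (fun T => T)). auto. }
  assert (Nnot : forall m, Qm m -> ~ N m).
  { intros m Qm0 Nm. destruct (Hav m Qm0) as [P [[HP _] nP]]. apply nP, Nm, HP. }
  set (PP := fun X : Obj K -> Prop => thick_ideal (fun x => N x \/ X x) /\
                                   forall m, Qm m -> ~ (N m \/ X m)).
  assert (chain : forall F : (Obj K -> Prop) -> Prop, (forall X, F X -> PP X) ->
     (forall X Y, F X -> F Y -> (forall t, X t -> Y t) \/ (forall t, Y t -> X t)) ->
     PP (fun t => exists X, F X /\ X t)).
  { intros F HF Hch. split.
    - set (fam := fun T : Obj K -> Prop => exists X, ((forall x, ~ X x) \/ F X) /\
                                            forall x, T x <-> (N x \/ X x)).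
      apply (@thick_ideal_ext _ (fun x => exists T, fam T /\ T x)).
      + apply directed_union.
        * intros T [X [[H0|FX] E]].
          -- apply (thick_ideal_ext HN). intro x. rewrite E. specialize (H0 x). tauto.
          -- destruct (HF X FX) as [HT _]. apply (thick_ideal_ext HT). intro x. rewrite E. tauto.
        * exists N. exists (fun _ => False). split; [left; auto|]. intro x; tauto.
        * intros T1 T2 [X1 [C1 E1]] [X2 [C2 E2]].
          destruct C1 as [C1|C1].
          { exists T2. split; [exists X2; auto|]. split; auto.
            intros x Hx. apply E2. apply E1 in Hx. destruct Hx as [Hx|Hx]; auto. exfalso; apply (C1 x Hx). }
          destruct C2 as [C2|C2].
          { exists T1. split; [exists X1; auto|]. split; auto.
            intros x Hx. apply E1. apply E2 in Hx. destruct Hx as [Hx|Hx]; auto. exfalso; apply (C2 x Hx). }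
          destruct (Hch X1 X2 C1 C2) as [L|L].
          { exists T2. split; [exists X2; auto|]. split; auto.
            intros x Hx. apply E2. apply E1 in Hx. destruct Hx as [Hx|Hx]; auto. }
          { exists T1. split; [exists X1; auto|]. split; auto.
            intros x Hx. apply E1. apply E2 in Hx. destruct Hx as [Hx|Hx]; auto. }
      + intro x. split.
        * intros [T [[X [C E]] Tx]]. apply E in Tx. destruct Tx as [Tx|Tx]; auto.
          destruct C as [C|C]; [exfalso; apply (C x Tx)|]. right. exists X; auto.
        * intros [Nx|[X [FX Xx]]].
          -- exists N. split; auto. exists (fun _ => False). split; [left; auto|]. intro y; tauto.
          -- exists (fun y => N y \/ X y). split; auto. exists X. split; auto. intro y; tauto.
    - intros m Qm0 [Nm|[X [FX Xm]]].
      + apply (Nnot m Qm0 Nm).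
      + destruct (HF X FX) as [_ D0]. apply (D0 m Qm0). auto. }
  destruct (@zorn_sets _ PP chain) as [A0 [[HA0 dA0] maxA0]].
  set (P0 := fun x => N x \/ A0 x).
  assert (HP0 : thick_ideal P0) by exact HA0.
  assert (meet : forall I : Obj K -> Prop, thick_ideal I -> ~ (forall a, I a -> P0 a) ->
            exists m, Qm m /\ gen (fun x => P0 x \/ I x) m).
  { intros I HI nI. apply NNPP; intro Hc.
    set (Gs := gen (fun x => P0 x \/ I x)).
    assert (NG : forall x, N x -> Gs x).
    { intros x Nx T [HT _]. apply Nx, HT. }
    assert (PPG : PP Gs).
    { split.
      - apply (thick_ideal_ext (gen_ti (fun x => P0 x \/ I x))). intro x. split; auto.
        intros [Nx|Gx]; auto. apply NG, Nx.
      - intros m Qm0 [Nm|Gm]; [apply (Nnot m Qm0 Nm)|]. apply Hc. exists m; auto. }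
    assert (AG : forall x, A0 x -> Gs x).
    { intros x Ax T [HT HT']. apply HT'. left. right. exact Ax. }
    pose proof (maxA0 Gs AG PPG) as GA.
    apply nI. intros a Ia. right. apply GA. intros T [HT HT']. apply HT'. right. exact Ia. }
  assert (prime0 : prime_ideal P0).
  { split; [exact HP0|split].
    - exists G. apply (dA0 G Q_G).
    - intros I J HI HJ HIJ. apply NNPP; intro Hno. apply not_or_and in Hno. destruct Hno as [nI nJ].
      destruct (meet I HI nI) as [m1 [Q1 G1]].
      destruct (meet J HJ nJ) as [m2 [Q2 G2]].
      set (T2 := RA P0 I).
      assert (HT2 : thick_ideal T2).
      { apply RA_ti; auto. intros u d Iu. apply ti_l; auto. }
      assert (G2T : T2 m2).
      { apply G2. split; auto. intros y [Py|Jy] u Iu.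
        - apply ti_r; auto.
        - apply HIJ; auto. }
      set (T1 := LA P0 T2).
      assert (HT1 : thick_ideal T1) by (apply LA_ti; auto).
      assert (G1T : T1 m1).
      { apply G1. split; auto. intros y [Py|Iy] v Tv c.
        - apply ti_l; auto. apply ti_l; auto.
        - apply Tv. apply ti_l; auto. }
      apply (dA0 _ (Q_mul _ _ Q1 Q2)). apply (G1T m2 G2T G). }
  apply (hdisj P0). split; split; auto; intros s Hs; apply dA0.
  - apply Q_S1; auto.
  - apply Q_S2; auto.
Qed.
End E.


Theorem mainTheorem19 (K : MDC) (G : Obj K) (A : Obj K) (S1 S2 : Obj K -> Prop) :
  thick_generator G ->
  (forall P, V A P <-> (VS S1 P \/ VS S2 P)) ->
  (forall P, ~ (VS S1 P /\ VS S2 P)) ->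
  exists A1 A2 : Obj K,
    (forall P, VS S1 P <-> V A1 P) /\ (forall P, VS S2 P <-> V A2 P).
Proof.
  intros hgen hV hdisj.
  destruct (key K G hgen S1 S2 hdisj) as [m [[a1 [a2 [Hm [H1 H2]]]] Pm]].
  exists (tens (tens A G) a1), (tens (tens A G) a2).
  split; intros P; rewrite (Vmul _ _ hgen); split.
  - intro h. split; [apply hV; left; auto | apply H1; auto].
  - intros [hA ha1]. destruct (proj1 (hV P) hA) as [h|h]; auto. exfalso.
    pose proof (H2 P h) as ha2. pose proof ha1 as [Hp _].
    destruct (proj2 (Hm P) (conj ha1 ha2)) as [_ nm]. apply nm, Pm, Hp.
  - intro h. split; [apply hV; right; auto | apply H2; auto].
  - intros [hA ha2]. destruct (proj1 (hV P) hA) as [h|h]; auto. exfalso.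
    pose proof (H1 P h) as ha1. pose proof ha2 as [Hp _].
    destruct (proj2 (Hm P) (conj ha1 ha2)) as [_ nm]. apply nm, Pm, Hp.
Qed.
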